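(* Let $c>0$, let $d\ge 1$, and let $\eta=\mathrm{diag}(-1,+1,\dots,+1)$ be the Minkowski metric on $\mathbb{R}^{d+1}$ (indices lowered with $\eta$). Let $t\mapsto \vec{x}(t)\in\mathbb{R}^d$ be a smooth trajectory with $|\vec v|<c$, where $\vec v=\mathrm{d}\vec x/\mathrm{d}t$, $\vec a=\mathrm{d}\vec v/\mathrm{d}t$, and $\gamma=(1-\vec v^{\,2}/c^2)^{-1/2}$. Let $\tau$ be proper time, $\mathrm{d}t/\mathrm{d}\tau=\gamma$, let $x^\mu(\tau)=(ct,\vec x)$ be the worldline, $v^\mu=\mathrm{d}x^\mu/\mathrm{d}\tau=(\gamma c,\gamma\vec v)$ and $a^\mu=\mathrm{d}v^\mu/\mathrm{d}\tau$. Define $(d+1)$-vectors recursively by $P_{(1)}^\mu=a^\mu$ and $$P_{(n)}^\mu=\Big(\delta^\mu_{\ \nu}+\frac{v^\mu v_\nu}{c^2}\Big)\frac{\mathrm{d}}{\mathrm{d}\tau}P_{(n-1)}^\nu,\qquad n\ge 2.$$ Let $\hat M$ be the $d\times d$ matrix $\hat M_{ij}=\delta_{ij}+\frac{\gamma^2}{c^2}v_iv_j$. Define $d$-vectors $\vec Q_{(n)}$ by $\vec Q_{(1)}=\vec a$ and $$\vec Q_{(n)}=\frac{1}{\gamma^n}\frac{\mathrm{d}}{\mathrm{d}t}\big(\gamma^n\vec Q_{(n-1)}\big)+\frac{\gamma^2}{c^2}\big(\vec v\cdot\vec Q_{(n-1)}\big)\vec a,\qquad n\ge 2.$$ Then for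 every $n\ge 1$, $$P_{(n)}^\mu=\Big(\frac{\gamma^{n+3}}{c}\,\vec v\cdot\vec Q_{(n)},\ \gamma^{n+1}\hat M\vec Q_{(n)}\Big),$$ where the first entry is the time component and the second the spatial components.
   Context: Dots denote Euclidean inner products in $\mathbb{R}^d$. $\hat M$ is invertible with inverse $\hat M^{-1}_{ij}=\delta_{ij}-v_iv_j/c^2$. *)

(* Defs.v *)
From Stdlib Require Import Reals Lra.
From Coquelicot Require Import Coquelicot.
Open Scope R_scope.

Fixpoint sumR (n : nat) (f : nat -> R) : R :=
  match n with O => 0 | S k => sumR k f + f k end.

Section Kinematics.
(* c : speed of light, d : spatial dimension,
   x i t : i-th spatial component (0 <= i < d) of the trajectory at time t. *)
Variables (c : R) (d : nat) (x : nat -> R -> R).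

Definition smooth_traj : Prop :=
  forall i, (i < d)%nat -> forall (k : nat) (t : R), ex_derive (Derive_n (x i) k) t.

Definition vel (i : nat) (t : R) : R := Derive (x i) t.
Definition acc (i : nat) (t : R) : R := Derive (vel i) t.

Definition dotE (u w : nat -> R) : R := sumR d (fun i => u i * w i).

Definition gam (t : R) : R :=
  / sqrt (1 - dotE (fun i => vel i t) (fun i => vel i t) / c ^ 2).

(* Q n i t = i-th component of Q_(n) at time t  (n >= 1; Q 0 is a dummy). *)
Fixpoint Q (n : nat) : nat -> R -> R :=
  match n with
  | O => acc
  | S O => acc
  | S m => fun i t =>
      / (gam t ^ (S m)) * Derive (fun s => gam s ^ (S m) * Q m i s) t
      + gam t ^ 2 / c ^ 2 * dotE (fun j => vel j t) (fun j => Q m j t) * acc i t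
  end.

(* Spacetime vectors: index 0 is the time component, index (S i) is the
   spatial component i (0 <= i < d). *)
Definition xmu (mu : nat) (t : R) : R :=
  match mu with O => c * t | S i => x i t end.

(* d/dtau, with dt/dtau = gamma (chain rule), acting on functions of t *)
Definition Dtau (f : R -> R) (t : R) : R := gam t * Derive f t.

Definition vmu (mu : nat) (t : R) : R := Dtau (xmu mu) t.
Definition amu (mu : nat) (t : R) : R := Dtau (vmu mu) t.

Definition mdot (u w : nat -> R) : R :=
  - (u O * w O) + sumR d (fun i => u (S i) * w (S i)).

Definition proj (vv w : nat -> R) (mu : nat) : R :=
  w mu + vv mu * mdot vv w / c ^ 2.

(* P n mu t = P_(n)^mu at (the proper time corresponding to) time t; n >= 1. *)
Fixpoint P (n : nat) : nat -> R -> R :=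
  match n with
  | O => amu
  | S O => amu
  | S m => fun mu t =>
      proj (fun nu => vmu nu t) (fun nu => Dtau (P m nu) t) mu
  end.

Definition Mhat (i j : nat) (t : R) : R :=
  (if Nat.eqb i j then 1 else 0) + gam t ^ 2 / c ^ 2 * vel i t * vel j t.

End Kinematics.

(* Main.v *)
Require Import Defs.
From Stdlib Require Import Reals Lra Lia FunctionalExtensionality.
From Coquelicot Require Import Coquelicot.
Open Scope R_scope.

Lemma isd_plus (f g : R -> R) (x a b : R) : is_derive f x a -> is_derive g x b ->
  is_derive (fun s => f s + g s) x (a + b).
Proof. intros; now apply (is_derive_plus f g). Qed.
Lemma isd_mult (f g : R -> R) (x a b : R) : is_derive f x a -> is_derive g x b ->
  is_derive (fun s => f s * g s) x (a * g x + f x * b).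
Proof. intros; apply (is_derive_mult f g); auto. intros; apply Rmult_comm. Qed.
Lemma isd_const (k x : R) : is_derive (fun _ => k) x 0.
Proof. apply (is_derive_const (K:=R_AbsRing) k x). Qed.
Lemma isd_id (x : R) : @is_derive R_AbsRing R_NormedModule (fun s : R => s) x 1.
Proof. apply (is_derive_id (K:=R_AbsRing)). Qed.
Lemma isd_ext (f g : R -> R) (x l : R) : (forall s, f s = g s) -> is_derive f x l -> is_derive g x l.
Proof. intros H H'. apply functional_extensionality in H. now subst. Qed.
Lemma isd_l (f : R -> R) (x l l' : R) : is_derive f x l -> l = l' -> is_derive f x l'.
Proof. now intros ? <-. Qed.

Lemma Derive_n_S f k : Derive_n f (S k) = Derive_n (Derive f) k.
Proof.
  induction k. reflexivity.
  change (Derive_n f (S (S k))) with (Derive (Derive_n f (S k))).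
  rewrite IHk. reflexivity.
Qed.

Fixpoint Ck (k : nat) (f : R -> R) : Prop :=
  match k with
  | O => forall t, ex_derive f t
  | S k => (forall t, ex_derive f t) /\ Ck k (Derive f)
  end.
Definition sm f := forall k, Ck k f.

Lemma Ck_ex k f : Ck k f -> forall t, ex_derive f t.
Proof. destruct k; simpl; tauto. Qed.
Lemma Ck_mono k f : Ck (S k) f -> Ck k f.
Proof.
  revert f; induction k; simpl; intros f H. tauto.
  destruct H as [H1 H2]. split. exact H1. apply IHk. exact H2.
Qed.
Lemma Ck_D k f : Ck (S k) f -> Ck k (Derive f).
Proof. simpl; tauto. Qed.

Lemma Ck_ext k f g : (forall s, f s = g s) -> Ck k f -> Ck k g.
Proof. intros H; apply functional_extensionality in H; now subst. Qed.

Lemma Ck_const k a : Ck k (fun _ => a).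
Proof.
  induction k; simpl. intros; apply ex_derive_const.
  split. intros; apply ex_derive_const.
  apply Ck_ext with (fun _ => 0). intros; now rewrite Derive_const. 
  clear IHk; induction k; simpl. intros; apply ex_derive_const.
  split. intros; apply ex_derive_const.
  apply Ck_ext with (fun _ => 0). intros; now rewrite Derive_const. exact IHk.
Qed.

Lemma Ck_plus k : forall f g, Ck k f -> Ck k g -> Ck k (fun s => f s + g s).
Proof.
  induction k; simpl; intros f g Hf Hg.
  intros t; apply (ex_derive_plus f g); auto.
  destruct Hf as [Hf1 Hf2]; destruct Hg as [Hg1 Hg2].
  split. intros t; apply (ex_derive_plus f g); auto.
  apply Ck_ext with (fun s => Derive f s + Derive g s).
  intros s; rewrite Derive_plus; auto.
  now apply IHk.
Qed.

Lemma Ck_mult k : forall f g, Ck k f -> Ck k g -> Ck k (fun s => f s * g s).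
Proof.
  induction k; simpl; intros f g Hf Hg.
  intros t; apply ex_derive_mult; auto.
  split. intros t; apply ex_derive_mult; [apply Hf|apply Hg].
  apply Ck_ext with (fun s => Derive f s * g s + f s * Derive g s).
  intros s; rewrite Derive_mult; auto; [apply Hf|apply Hg].
  apply Ck_plus; apply IHk; try tauto.
  apply (Ck_mono k g); simpl; tauto.
  apply (Ck_mono k f); simpl; tauto.
Qed.

Lemma Ck_inv k : forall f, Ck k f -> (forall s, f s <> 0) -> Ck k (fun s => / f s).
Proof.
  induction k; simpl; intros f Hf Hn.
  intros t; apply ex_derive_inv; auto.
  split. intros t; apply ex_derive_inv; auto; apply Hf.
  apply Ck_ext with (fun s => (-1 * Derive f s) * ((/ f s) * (/ f s))).
  intros s; rewrite Derive_inv; auto. field; auto. apply Hf.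
  apply Ck_mult. apply Ck_mult. apply Ck_const. tauto.
  assert (Ck k (fun s => / f s)) by (apply IHk; auto; apply (Ck_mono k f); simpl; tauto).
  now apply Ck_mult.
Qed.

Lemma Ck_sqrt k : forall f, Ck k f -> (forall s, 0 < f s) -> Ck k (fun s => sqrt (f s)).
Proof.
  induction k; simpl; intros f Hf Hn.
  intros t. eexists. apply is_derive_sqrt; auto. apply Derive_correct; auto.
  split. intros t. eexists. apply is_derive_sqrt; auto. apply Derive_correct; apply Hf.
  apply Ck_ext with (fun s => Derive f s * / (2 * sqrt (f s))).
  intros s. symmetry. apply is_derive_unique. apply is_derive_sqrt; auto.
  apply Derive_correct; apply Hf.
  apply Ck_mult. tauto. apply Ck_inv. apply Ck_mult. apply Ck_const.
  apply IHk; auto. apply (Ck_mono k f); simpl; tauto.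
  intros s. specialize (Hn s). apply sqrt_lt_R0 in Hn. lra.
Qed.

Lemma Ck_pow k f n : Ck k f -> Ck k (fun s => f s ^ n).
Proof.
  intros H; induction n; simpl. apply Ck_const. now apply Ck_mult.
Qed.

Lemma Ck_sumR k n f : (forall i, (i < n)%nat -> Ck k (f i)) ->
  Ck k (fun s => sumR n (fun i => f i s)).
Proof.
  induction n; intros H; simpl. apply Ck_const.
  apply Ck_plus. apply IHn; intros; apply H; lia. apply H; lia.
Qed.

Lemma Ck_of_n f : (forall k t, ex_derive (Derive_n f k) t) -> forall k, Ck k f.
Proof.
  intros H k; revert f H; induction k; simpl; intros f H.
  apply (H O).
  split. apply (H O). apply IHk. intros j t. rewrite <- Derive_n_S. apply H.
Qed.

Lemma sm_ext f g : (forall s, f s = g s) -> sm f -> sm g.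
Proof. intros H Hf k; apply Ck_ext with f; auto. Qed.
Lemma sm_const a : sm (fun _ => a).
Proof. intros k; apply Ck_const. Qed.
Lemma sm_id : sm (fun s => s).
Proof.
  intros k. destruct k. simpl. intros; apply ex_derive_id.
  simpl. split. intros; apply ex_derive_id.
  apply Ck_ext with (fun _ => 1). intros s. apply sym_eq, is_derive_unique, isd_id.
  apply Ck_const.
Qed.
Lemma sm_plus f g : sm f -> sm g -> sm (fun s => f s + g s).
Proof. intros ? ? k; now apply Ck_plus. Qed.
Lemma sm_mult f g : sm f -> sm g -> sm (fun s => f s * g s).
Proof. intros ? ? k; now apply Ck_mult. Qed.
Lemma sm_inv f : sm f -> (forall s, f s <> 0) -> sm (fun s => / f s).
Proof. intros ? ? k; now apply Ck_inv. Qed.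
Lemma sm_sqrt f : sm f -> (forall s, 0 < f s) -> sm (fun s => sqrt (f s)).
Proof. intros ? ? k; now apply Ck_sqrt. Qed.
Lemma sm_pow f n : sm f -> sm (fun s => f s ^ n).
Proof. intros ? k; now apply Ck_pow. Qed.
Lemma sm_sumR n f : (forall i, (i < n)%nat -> sm (f i)) ->
  sm (fun s => sumR n (fun i => f i s)).
Proof. intros H k; apply Ck_sumR; intros; now apply H. Qed.
Lemma sm_D f : sm f -> sm (Derive f).
Proof. intros H k; apply Ck_D, H. Qed.
Lemma sm_ex f : sm f -> forall t, ex_derive f t.
Proof. intros H; apply (Ck_ex 0), H. Qed.
Lemma sm_isd f t : sm f -> is_derive f t (Derive f t).
Proof. intros H; apply Derive_correct, sm_ex, H. Qed.

Lemma sumR_ext n f g : (forall i, (i < n)%nat -> f i = g i) -> sumR n f = sumR n g.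
Proof.
  induction n; intros H; simpl. reflexivity.
  rewrite IHn by (intros; apply H; lia). rewrite H by lia. reflexivity.
Qed.

Lemma isd_sumR n (f : nat -> R -> R) (f' : nat -> R) t :
  (forall i, (i < n)%nat -> is_derive (f i) t (f' i)) ->
  is_derive (fun s => sumR n (fun i => f i s)) t (sumR n f').
Proof.
  induction n; intros H; simpl. apply isd_const.
  apply isd_plus. apply IHn; intros; apply H; lia. apply H; lia.
Qed.

Lemma sumR_lin4 n (v q q' w a : nat -> R) (k A B C E : R) :
  sumR n (fun i => k * v i * (k * (A * q i + B * q' i + C * w i + E * a i)))
  = k * k * (A * sumR n (fun i => v i * q i) + B * sumR n (fun i => v i * q' i)
       + C * sumR n (fun i => v i * w i) + E * sumR n (fun i => v i * a i)).
Proof. induction n; simpl. ring. rewrite IHn. ring. Qed.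

Lemma sumR_lin3 n (v q q' a : nat -> R) (K L : R) :
  sumR n (fun i => v i * (q' i + K * q i + L * a i))
  = sumR n (fun i => v i * q' i) + K * sumR n (fun i => v i * q i)
    + L * sumR n (fun i => v i * a i).
Proof. induction n; simpl. ring. rewrite IHn. ring. Qed.

Lemma sumR_d2 n (v q q' a : nat -> R) :
  sumR n (fun i => a i * q i + v i * q' i)
  = sumR n (fun i => a i * q i) + sumR n (fun i => v i * q' i).
Proof. induction n; simpl. ring. rewrite IHn. ring. Qed.

Lemma sumR_vva n (v a : nat -> R) :
  sumR n (fun i => a i * v i + v i * a i) = 2 * sumR n (fun i => v i * a i).
Proof. induction n; simpl. ring. rewrite IHn. ring. Qed.

Lemma sumR_delta0 n i (w : nat -> R) : (n <= i)%nat ->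
  sumR n (fun j => (if Nat.eqb i j then 1 else 0) * w j) = 0.
Proof.
  induction n; intros H; simpl. reflexivity.
  rewrite IHn by lia. destruct (Nat.eqb_spec i n). lia. ring.
Qed.

Lemma sumR_delta n i (w : nat -> R) : (i < n)%nat ->
  sumR n (fun j => (if Nat.eqb i j then 1 else 0) * w j) = w i.
Proof.
  induction n; intros H; simpl. lia.
  destruct (Nat.eqb_spec i n).
  subst. rewrite sumR_delta0 by lia. ring.
  rewrite IHn by lia. ring.
Qed.

Lemma sumR_Mhat c d x i t (w : nat -> R) : (i < d)%nat ->
  sumR d (fun j => Mhat c d x i j t * w j)
  = w i + gam c d x t ^ 2 / c ^ 2 * vel x i t * dotE d (fun j => vel x j t) w.
Proof.
  intros Hi. unfold Mhat, dotE.
  transitivity (sumR d (fun j => (if Nat.eqb i j then 1 else 0) * w j)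
     + gam c d x t ^ 2 / c ^ 2 * vel x i t * sumR d (fun j => vel x j t * w j)).
  2: now rewrite sumR_delta.
  generalize (gam c d x t ^ 2 / c ^ 2). intros K.
  clear Hi. generalize d at 1 2 3. intros n. induction n; simpl. ring. rewrite IHn. ring.
Qed.

Lemma sm_x d x : smooth_traj d x -> forall i, (i < d)%nat -> sm (x i).
Proof. intros H i Hi k. apply Ck_of_n. intros; apply H; auto. Qed.

Lemma sm_vel d x : smooth_traj d x -> forall i, (i < d)%nat -> sm (vel x i).
Proof. intros H i Hi. exact (sm_D _ (sm_x d x H i Hi)). Qed.

Lemma sm_acc d x : smooth_traj d x -> forall i, (i < d)%nat -> sm (acc x i).
Proof. intros H i Hi. exact (sm_D _ (sm_vel d x H i Hi)). Qed.

Lemma u_pos c d x : 0 < c ->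
  (forall t, dotE d (fun i => vel x i t) (fun i => vel x i t) < c ^ 2) ->
  forall t, 0 < 1 - dotE d (fun i => vel x i t) (fun i => vel x i t) / c ^ 2.
Proof.
  intros Hc Hs t. specialize (Hs t).
  assert (0 < c ^ 2) by (apply pow_lt; lra).
  replace (1 - dotE d (fun i => vel x i t) (fun i => vel x i t) / c ^ 2)
    with ((c ^ 2 - dotE d (fun i => vel x i t) (fun i => vel x i t)) / c ^ 2)
    by (field; lra).
  apply Rdiv_lt_0_compat; lra.
Qed.

Lemma gam_pos c d x : 0 < c ->
  (forall t, dotE d (fun i => vel x i t) (fun i => vel x i t) < c ^ 2) ->
  forall t, 0 < gam c d x t.
Proof.
  intros Hc Hs t. unfold gam. apply Rinv_0_lt_compat, sqrt_lt_R0, u_pos; auto.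
Qed.

Lemma gam_V c d x : 0 < c ->
  (forall t, dotE d (fun i => vel x i t) (fun i => vel x i t) < c ^ 2) ->
  forall t, dotE d (fun i => vel x i t) (fun i => vel x i t)
            = c ^ 2 - c ^ 2 / gam c d x t ^ 2.
Proof.
  intros Hc Hs t. pose proof (u_pos c d x Hc Hs t) as Hu.
  unfold gam.
  set (V := dotE d (fun i => vel x i t) (fun i => vel x i t)) in *.
  assert (Hq : sqrt (1 - V / c ^ 2) ^ 2 = 1 - V / c ^ 2) by (apply pow2_sqrt; lra).
  assert (sqrt (1 - V / c ^ 2) <> 0) by (apply Rgt_not_eq, sqrt_lt_R0; lra).
  replace ((/ sqrt (1 - V / c ^ 2)) ^ 2) with (/ (sqrt (1 - V / c ^ 2) ^ 2)) by (field; auto).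
  rewrite Hq. assert (Hcv : c ^ 2 - V = c ^ 2 * (1 - V / c ^ 2)) by (field; lra). assert (0 < c ^ 2) by (apply pow_lt; lra). field. split. lra. rewrite Hcv. apply Rgt_not_eq, Rmult_lt_0_compat; lra.
Qed.

Lemma sm_gam c d x : 0 < c -> smooth_traj d x ->
  (forall t, dotE d (fun i => vel x i t) (fun i => vel x i t) < c ^ 2) ->
  sm (gam c d x).
Proof.
  intros Hc Hsm Hs.
  apply sm_ext with (fun s => / sqrt (1 + (- / c ^ 2) * sumR d (fun i => vel x i s * vel x i s))).
  intros s. unfold gam, dotE. f_equal. f_equal. unfold Rdiv. ring.
  apply sm_inv. apply sm_sqrt. apply sm_plus. apply sm_const. apply sm_mult. apply sm_const.
  apply (sm_sumR d (fun i s => vel x i s * vel x i s)). intros i Hi.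
  apply sm_mult; apply (sm_vel d); auto.
  intros s. pose proof (u_pos c d x Hc Hs s). unfold dotE in H.
  replace (1 + - / c ^ 2 * sumR d (fun i : nat => vel x i s * vel x i s)) with
   (1 - sumR d (fun i : nat => vel x i s * vel x i s) / c ^ 2) by (unfold Rdiv; ring). exact H.
  intros s. pose proof (u_pos c d x Hc Hs s). unfold dotE in H.
  replace (1 + - / c ^ 2 * sumR d (fun i : nat => vel x i s * vel x i s)) with
   (1 - sumR d (fun i : nat => vel x i s * vel x i s) / c ^ 2) by (unfold Rdiv; ring).
  apply Rgt_not_eq, sqrt_lt_R0. exact H.
Qed.

Lemma isd_gam c d x : 0 < c -> smooth_traj d x ->
  (forall t, dotE d (fun i => vel x i t) (fun i => vel x i t) < c ^ 2) ->
  forall t, is_derive (gam c d x) t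
    (gam c d x t ^ 3 * dotE d (fun i => vel x i t) (fun i => acc x i t) / c ^ 2).
Proof.
  intros Hc Hsm Hs t.
  pose proof (u_pos c d x Hc Hs t) as Hu. unfold dotE in Hu.
  apply isd_ext with (fun s => / sqrt (1 + (- / c ^ 2) * sumR d (fun i => vel x i s * vel x i s))).
  intros s. unfold gam, dotE. f_equal. f_equal. unfold Rdiv. ring.
  eapply isd_l. apply is_derive_inv. apply is_derive_sqrt.
  apply isd_plus. apply isd_const. apply is_derive_scal.
  apply (isd_sumR d (fun i s => vel x i s * vel x i s)
           (fun i => acc x i t * vel x i t + vel x i t * acc x i t)).
  intros i Hi. apply isd_mult; apply sm_isd; apply (sm_vel d); auto.
  replace (1 + - / c ^ 2 * sumR d (fun i : nat => vel x i t * vel x i t)) with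
   (1 - sumR d (fun i : nat => vel x i t * vel x i t) / c ^ 2) by (unfold Rdiv; ring). exact Hu.
  replace (1 + - / c ^ 2 * sumR d (fun i : nat => vel x i t * vel x i t)) with
   (1 - sumR d (fun i : nat => vel x i t * vel x i t) / c ^ 2) by (unfold Rdiv; ring).
  apply Rgt_not_eq, sqrt_lt_R0. exact Hu.
  rewrite sumR_vva. unfold gam, dotE.
  replace (1 + - / c ^ 2 * sumR d (fun i : nat => vel x i t * vel x i t)) with
   (1 - sumR d (fun i : nat => vel x i t * vel x i t) / c ^ 2) by (unfold Rdiv; ring).
  assert (sqrt (1 - sumR d (fun i : nat => vel x i t * vel x i t) / c ^ 2) <> 0)
    by (apply Rgt_not_eq, sqrt_lt_R0; exact Hu).
  field. split; auto; lra.
Qed.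

Lemma isd_gpow c d x : 0 < c -> smooth_traj d x ->
  (forall t, dotE d (fun i => vel x i t) (fun i => vel x i t) < c ^ 2) ->
  forall k t, is_derive (fun s => gam c d x s ^ k) t
    (INR k * gam c d x t ^ k *
      (gam c d x t ^ 2 * dotE d (fun i => vel x i t) (fun i => acc x i t) / c ^ 2)).
Proof.
  intros Hc Hsm Hs k t.
  eapply isd_l. apply is_derive_pow, isd_gam; auto.
  destruct k; simpl. ring. field. lra.
Qed.

Lemma Q_S c d x n i t : (1 <= n)%nat ->
  Q c d x (S n) i t =
  / (gam c d x t ^ (S n)) * Derive (fun s => gam c d x s ^ (S n) * Q c d x n i s) t
  + gam c d x t ^ 2 / c ^ 2 * dotE d (fun j => vel x j t) (fun j => Q c d x n j t) * acc x i t.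
Proof. intros H. destruct n. lia. reflexivity. Qed.

Lemma P_S c d x n mu t : (1 <= n)%nat ->
  P c d x (S n) mu t =
  proj c d (fun nu => vmu c d x nu t) (fun nu => Dtau c d x (P c d x n nu) t) mu.
Proof. intros H. destruct n. lia. reflexivity. Qed.

Lemma sm_Q c d x : 0 < c -> smooth_traj d x ->
  (forall t, dotE d (fun i => vel x i t) (fun i => vel x i t) < c ^ 2) ->
  forall n i, (i < d)%nat -> sm (Q c d x n i).
Proof.
  intros Hc Hsm Hs n. induction n as [|m IH]; intros i Hi.
  apply (sm_acc d); auto.
  destruct m. apply (sm_acc d); auto.
  apply sm_ext with (fun t => / (gam c d x t ^ (S (S m))) * Derive (fun s => gam c d x s ^ (S (S m)) * Q c d x (S m) i s) t
  + gam c d x t ^ 2 * / c ^ 2 * sumR d (fun j => vel x j t * Q c d x (S m) j t) * acc x i t).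
  intros t. rewrite Q_S by lia. reflexivity.
  pose proof (sm_gam c d x Hc Hsm Hs) as Hg.
  apply sm_plus. apply sm_mult.
  apply sm_inv. apply sm_pow; auto. intros s; apply pow_nonzero, Rgt_not_eq, gam_pos; auto.
  apply sm_D. apply sm_mult. apply sm_pow; auto. apply IH; auto.
  apply sm_mult. apply sm_mult. apply sm_mult. apply sm_pow; auto. apply sm_const.
  apply (sm_sumR d (fun j t => vel x j t * Q c d x (S m) j t)). intros j Hj.
  apply sm_mult. apply (sm_vel d); auto. apply IH; auto.
  apply (sm_acc d); auto.
Qed.

Lemma Q_S_val c d x : 0 < c -> smooth_traj d x ->
  (forall t, dotE d (fun i => vel x i t) (fun i => vel x i t) < c ^ 2) ->
  forall n i t, (1 <= n)%nat -> (i < d)%nat ->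
  Q c d x (S n) i t =
  Derive (Q c d x n i) t
  + INR (S n) * (gam c d x t ^ 2 * dotE d (fun j => vel x j t) (fun j => acc x j t) / c ^ 2)
      * Q c d x n i t
  + gam c d x t ^ 2 / c ^ 2 * dotE d (fun j => vel x j t) (fun j => Q c d x n j t) * acc x i t.
Proof.
  intros Hc Hsm Hs n i t Hn Hi. rewrite Q_S by auto.
  replace (Derive (fun s => gam c d x s ^ S n * Q c d x n i s) t) with
    (INR (S n) * gam c d x t ^ (S n) *
      (gam c d x t ^ 2 * dotE d (fun i => vel x i t) (fun i => acc x i t) / c ^ 2) * Q c d x n i t
     + gam c d x t ^ (S n) * Derive (Q c d x n i) t).
  2:{ symmetry. apply is_derive_unique. apply isd_mult. apply isd_gpow; auto.
      apply sm_isd. apply sm_Q; auto. }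
  assert (gam c d x t ^ S n <> 0) by (apply pow_nonzero, Rgt_not_eq, gam_pos; auto).
  field. split; auto; lra.
Qed.

Lemma vmu_0 c d x t : vmu c d x 0 t = gam c d x t * c.
Proof.
  unfold vmu, Dtau, xmu. f_equal.
  apply is_derive_unique. eapply isd_l. apply is_derive_scal. apply isd_id. ring.
Qed.

Lemma vmu_S c d x i t : vmu c d x (S i) t = gam c d x t * vel x i t.
Proof. reflexivity. Qed.

Definition DQ c d x n t := dotE d (fun j => vel x j t) (fun j => Q c d x n j t).

Definition Alt c d x n := forall t,
  P c d x n 0 t = gam c d x t ^ (n + 3) / c * DQ c d x n t /\
  forall i, (i < d)%nat -> P c d x n (S i) t =
     gam c d x t ^ (n + 1) * Q c d x n i t
     + gam c d x t ^ (n + 3) / c ^ 2 * vel x i t * DQ c d x n t.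

Lemma Alt_1 c d x : 0 < c -> smooth_traj d x ->
  (forall t, dotE d (fun i => vel x i t) (fun i => vel x i t) < c ^ 2) -> Alt c d x 1.
Proof.
  intros Hc Hsm Hs t.
  assert (Hcn : c <> 0) by lra.
  pose proof (isd_gam c d x Hc Hsm Hs t) as Hg.
  change (P c d x 1) with (amu c d x). unfold DQ. change (Q c d x 1) with (acc x).
  unfold amu, Dtau. split.
  - replace (Derive (vmu c d x 0) t) with
      (gam c d x t ^ 3 * dotE d (fun i => vel x i t) (fun i => acc x i t) / c ^ 2 * c).
    2:{ symmetry. apply is_derive_unique.
        apply isd_ext with (fun s => gam c d x s * c). intros s; symmetry; apply vmu_0.
        eapply isd_l. apply isd_mult. exact Hg. apply isd_const. cbv beta; ring. }
    simpl. field. auto.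
  - intros i Hi.
    replace (Derive (vmu c d x (S i)) t) with
      (gam c d x t ^ 3 * dotE d (fun i => vel x i t) (fun i => acc x i t) / c ^ 2 * vel x i t
       + gam c d x t * acc x i t).
    2:{ symmetry. apply is_derive_unique.
        apply isd_ext with (fun s => gam c d x s * vel x i s). intros s; symmetry; apply vmu_S.
        apply isd_mult. exact Hg. apply sm_isd. apply (sm_vel d); auto. }
    simpl. field. auto.
Qed.

Lemma Alt_S c d x n : 0 < c -> smooth_traj d x ->
  (forall t, dotE d (fun i => vel x i t) (fun i => vel x i t) < c ^ 2) ->
  (1 <= n)%nat -> Alt c d x n -> Alt c d x (S n).
Proof.
  intros Hc Hsm Hs Hn IH t.
  assert (Hcn : c <> 0) by lra.
  assert (Hgn : gam c d x t <> 0) by (apply Rgt_not_eq, gam_pos; auto).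
  pose proof (gam_V c d x Hc Hs t) as HV.
  set (g := gam c d x t) in *.
  set (Z := dotE d (fun i => vel x i t) (fun i => acc x i t)).
  set (D := sumR d (fun j => vel x j t * Q c d x n j t)).
  set (D1 := sumR d (fun j => vel x j t * Derive (Q c d x n j) t)).
  set (Y := sumR d (fun j => acc x j t * Q c d x n j t)).
  set (Gp := g ^ 2 * Z / c ^ 2).
  assert (HD : is_derive (fun s => sumR d (fun j => vel x j s * Q c d x n j s)) t (Y + D1)).
  { unfold Y, D1. rewrite <- sumR_d2.
    apply (isd_sumR d (fun j s => vel x j s * Q c d x n j s)
       (fun j => acc x j t * Q c d x n j t + vel x j t * Derive (Q c d x n j) t)).
    intros j Hj. apply isd_mult. apply sm_isd, (sm_vel d); auto.
    apply sm_isd, sm_Q; auto. }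
  assert (H0 : is_derive (P c d x n 0) t
     (INR (n + 3) * g ^ (n + 3) * Gp / c * D + g ^ (n + 3) / c * (Y + D1))).
  { apply isd_ext with (fun s => gam c d x s ^ (n + 3) * / c * sumR d (fun j => vel x j s * Q c d x n j s)).
    intros s. rewrite (proj1 (IH s)). reflexivity.
    eapply isd_l. apply isd_mult. apply isd_mult. apply isd_gpow; auto. apply isd_const.
    exact HD. cbv beta. fold g. fold D. unfold Gp, Z. field. auto. }
  assert (HI : forall i, (i < d)%nat -> is_derive (P c d x n (S i)) t
     (INR (n + 1) * g ^ (n + 1) * Gp * Q c d x n i t + g ^ (n + 1) * Derive (Q c d x n i) t
      + (INR (n + 3) * g ^ (n + 3) * Gp / c ^ 2 * D + g ^ (n + 3) / c ^ 2 * (Y + D1)) * vel x i t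
      + g ^ (n + 3) / c ^ 2 * D * acc x i t)).
  { intros i Hi.
    apply isd_ext with (fun s => gam c d x s ^ (n + 1) * Q c d x n i s
       + gam c d x s ^ (n + 3) * / c ^ 2 * vel x i s * sumR d (fun j => vel x j s * Q c d x n j s)).
    intros s. rewrite (proj2 (IH s) i Hi). reflexivity.
    eapply isd_l. apply isd_plus. apply isd_mult. apply isd_gpow; auto. apply sm_isd, sm_Q; auto.
    apply isd_mult. apply isd_mult. apply isd_mult. apply isd_gpow; auto. apply isd_const.
    apply sm_isd, (sm_vel d); auto. exact HD.
    cbv beta. fold g. fold D. unfold Gp, Z. change (Derive (vel x i) t) with (acc x i t). field. auto. }
  split.
  - rewrite P_S by lia. unfold proj, mdot. cbv beta. rewrite vmu_0. unfold Dtau.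
    rewrite (is_derive_unique _ _ _ H0).
    rewrite (sumR_ext d _ (fun i => g * vel x i t * (g * (INR (n + 1) * g ^ (n + 1) * Gp * Q c d x n i t + g ^ (n + 1) * Derive (Q c d x n i) t + (INR (n + 3) * g ^ (n + 3) * Gp / c ^ 2 * D + g ^ (n + 3) / c ^ 2 * (Y + D1)) * vel x i t + g ^ (n + 3) / c ^ 2 * D * acc x i t)))).
    2:{ intros i Hi. rewrite vmu_S. rewrite (is_derive_unique _ _ _ (HI i Hi)). reflexivity. }
    rewrite sumR_lin4. fold D D1. fold g.
    unfold DQ, dotE. cbv beta.
    rewrite (sumR_ext d (fun j => vel x j t * Q c d x (S n) j t) (fun j => vel x j t * (Derive (Q c d x n j) t + INR (S n) * Gp * Q c d x n j t + (g ^ 2 / c ^ 2 * D) * acc x j t))).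
    2:{ intros j Hj. cbv beta. rewrite Q_S_val by auto. fold g. reflexivity. }
    rewrite sumR_lin3. fold D D1.
    unfold dotE in HV. cbv beta in HV. rewrite HV.
    change (sumR d (fun i => vel x i t * acc x i t)) with Z.
    unfold Gp. rewrite ?pow_add. rewrite <- ?tech_pow_Rmult. rewrite ?plus_INR, ?S_INR, ?INR_0.
    field. auto.
  - intros i Hi. rewrite P_S by lia. unfold proj, mdot. cbv beta. rewrite vmu_0, vmu_S. unfold Dtau.
    rewrite (is_derive_unique _ _ _ (HI i Hi)).
    rewrite (Q_S_val c d x Hc Hsm Hs n i t Hn Hi). fold g.
    rewrite (is_derive_unique _ _ _ H0).
    rewrite (sumR_ext d _ (fun i => g * vel x i t * (g * (INR (n + 1) * g ^ (n + 1) * Gp * Q c d x n i t + g ^ (n + 1) * Derive (Q c d x n i) t + (INR (n + 3) * g ^ (n + 3) * Gp / c ^ 2 * D + g ^ (n + 3) / c ^ 2 * (Y + D1)) * vel x i t + g ^ (n + 3) / c ^ 2 * D * acc x i t)))).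
    2:{ intros i' Hi'. rewrite vmu_S. rewrite (is_derive_unique _ _ _ (HI i' Hi')). reflexivity. }
    rewrite sumR_lin4. fold D D1. fold g.
    unfold DQ, dotE. cbv beta.
    rewrite (sumR_ext d (fun j => vel x j t * Q c d x (S n) j t) (fun j => vel x j t * (Derive (Q c d x n j) t + INR (S n) * Gp * Q c d x n j t + (g ^ 2 / c ^ 2 * D) * acc x j t))).
    2:{ intros j Hj. cbv beta. rewrite Q_S_val by auto. fold g. reflexivity. }
    rewrite sumR_lin3. fold D D1.
    unfold dotE in HV. cbv beta in HV. rewrite HV.
    change (sumR d (fun i => vel x i t * acc x i t)) with Z.
    unfold Gp. rewrite ?pow_add. rewrite <- ?tech_pow_Rmult. rewrite ?plus_INR, ?S_INR, ?INR_0.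
    field. auto.
Qed.

Lemma Alt_all c d x : 0 < c -> smooth_traj d x ->
  (forall t, dotE d (fun i => vel x i t) (fun i => vel x i t) < c ^ 2) ->
  forall n, (1 <= n)%nat -> Alt c d x n.
Proof.
  intros Hc Hsm Hs n. induction n; intros Hn. lia.
  destruct n. apply Alt_1; auto. apply Alt_S; auto. lia. apply IHn. lia.
Qed.

Theorem proposition1 (c : R) (d : nat) (x : nat -> R -> R)
  (Hc : 0 < c) (Hd : (1 <= d)%nat)
  (Hsmooth : smooth_traj d x)
  (Hsub : forall t, dotE d (fun i => vel x i t) (fun i => vel x i t) < c ^ 2) :
  forall (n : nat), (1 <= n)%nat -> forall t : R,
    P c d x n O t
      = gam c d x t ^ (n + 3) / c
        * dotE d (fun i => vel x i t) (fun i => Q c d x n i t)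
    /\ forall i, (i < d)%nat ->
       P c d x n (S i) t
       = gam c d x t ^ (n + 1)
         * sumR d (fun j => Mhat c d x i j t * Q c d x n j t).
Proof.
  intros n Hn t.
  destruct (Alt_all c d x Hc Hsmooth Hsub n Hn t) as [H0 HS].
  split. rewrite H0. reflexivity.
  intros i Hi. rewrite (HS i Hi).
  rewrite (sumR_Mhat c d x i t (fun j => Q c d x n j t) Hi).
  unfold DQ. rewrite !pow_add. field. lra.
Qed.
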